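(* Let $Z$ be the transport operator. Then: (1) $\ker Z=\ker|Z|=\bigoplus_{k=1}^{N-1}\mathrm{span}\{\varphi_{a_k}:a=n_{k+1},\dots,n_k-1\}$; (2) the restriction of $Z$ to $\operatorname{ran}|Z|$ and the restriction of $Z^*$ to $ZZ^*\mathcal H$ are isometric isomorphisms between $\operatorname{ran}|Z|$ and $ZZ^*\mathcal H$; (3) for $k=1,\dots,N-1$ and $a=0,\dots,n_{k+1}-1$, $Z\varphi_{a_k}=|a_{k+1}\rangle$ and $Z^*|a_{k+1}\rangle=\varphi_{a_k}$.
   Context: Fix $N\ge2$ and integers $n_1\ge n_2\ge\dots\ge n_N\ge1$. Let $\mathcal H=\bigoplus_{k=1}^N E_k$ where $E_k$ has orthonormal basis $\{|a_k\rangle:0\le a\le n_k-1\}$, and let $P_k$ be the orthogonal projection onto $E_k$. For vectors $x,y$, $|x\rangle\langle y|$ is the operator $u\mapsto\langle y,u\rangle x$. $\zeta_k=e^{2\pi i/n_k}$, $\varphi_{a_k}=n_k^{-1/2}\sum_{b=0}^{n_k-1}\zeta_k^{-ba}|b_k\rangle$. For $1\le k\le N-1$, $Z_k=n_k^{-1/2}\sum_{b=0}^{n_{k+1}-1}\sum_{a=0}^{n_k-1}\zeta_k^{ba}|b_{k+1}\rangle\langle a_k|$. The transport operator $Z=\bigoplus_{k=1}^{N-1}Z_k$ is the operator from $\bigoplus_{k=1}^{N-1}E_k$ into $\mathcal H$ which equals $Z_k$ on $E_k$; $Z^*$ is its adjoint (mapping $\bigoplus_{k=2}^NE_k$ into $\bigoplus_{k=1}^{N-1}E_k$)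 and $|Z|=Z^*Z$. *)

(* Defs.v *)
From HB Require Import structures.
From mathcomp Require Import all_boot all_order all_algebra.
From mathcomp Require Import complex.
From mathcomp Require Import reals trigo.
Import GRing.Theory Num.Theory.


Unset Printing Implicit Defensive.
Local Open Scope ring_scope.
Local Open Scope complex_scope.

Section Transport.
Variable R : realType.
(* Blocks are indexed 0-based: block k (0 <= k < N) is the paper's E_{k+1},
   of dimension n k (the paper's n_{k+1}). *)
Variable N : nat.
Variable n : nat -> nat.

(* index set of the orthonormal basis { |a_k> } of H = (+)_k E_k *)
Definition idx := {k : 'I_N & 'I_(n k)}.
Definition hvec := {ffun idx -> R[i]}.

Definition hdot (x y : hvec) : R[i] := \sum_(i : idx) (x i)^* * y i.
Definition hnorm (x : hvec) : R[i] := sqrtC (hdot x x).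

(* |a_k> (k, a : nat; it is the zero vector if k >= N or a >= n k) *)
Definition ket (k a : nat) : hvec :=
  [ffun i : idx => if (tag i == k :> nat) && (tagged i == a :> nat) then 1 else 0].

Definition ketbra (x y : hvec) (u : hvec) : hvec := hdot y u *: x.

Definition zeta (m : nat) : R[i] :=
  cos (2 * pi / m%:R) +i* sin (2 * pi / m%:R).
Definition isqrt (m : nat) : R[i] := ((Num.sqrt (m%:R : R))^-1)%:C.

Definition phi (k a : nat) : hvec :=
  \sum_(b < n k) (isqrt (n k) * (zeta (n k) ^+ (b * a))^-1) *: ket k b.

Definition Zk (k : nat) (u : hvec) : hvec :=
  isqrt (n k) *: \sum_(b < n k.+1) \sum_(a < n k)
     (zeta (n k) ^+ (b * a)) *: ketbra (ket k.+1 b) (ket k a) u.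

(* transport operator Z = (+)_{k=1}^{N-1} Z_k, defined on (+)_{k<N-1} E_k
   (it is extended by 0 on the last block; all statements restrict to the
   domain explicitly). *)
Definition transport (u : hvec) : hvec := \sum_(k < N.-1) Zk k u.

Definition evec (i : idx) : hvec := [ffun j => if j == i then 1 else 0].

(* adjoint of an operator T on H:  T^* y = sum_i <T e_i, y> e_i,
   i.e. the unique operator with <T x, y> = <x, T^* y> when T is linear *)
Definition adj (T : hvec -> hvec) (y : hvec) : hvec :=
  \sum_(i : idx) hdot (T (evec i)) y *: evec i.

Definition isometric_iso (P Q : hvec -> Prop) (T : hvec -> hvec) : Prop :=
  [/\ (forall (c : R[i]) x y, P x -> P y -> T (c *: x + y) = c *: T x + T y),
      (forall x, P x -> Q (T x)),
      (forall x y, P x -> P y -> T x = T y -> x = y),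
      (forall y, Q y -> exists2 x, P x & T x = y)
    & (forall x, P x -> hnorm (T x) = hnorm x)].

End Transport.

(* Main.v *)
Require Import Defs.
From HB Require Import structures.
From mathcomp Require Import all_boot all_order all_algebra.
From mathcomp Require Import complex.
From mathcomp Require Import reals trigo.
From mathcomp Require Import ring lra zify.
Import Order.TTheory GRing.Theory Num.Theory.
Local Open Scope ring_scope.


Section Z.
Open Scope complex_scope.
Variable R : realType.

Lemma mulC_rect (a b c d : R) : (a +i* b) * (c +i* d) = (a * c - b * d) +i* (a * d + b * c).
Proof. by []. Qed.

Lemma zeta_expr m j : zeta R m ^+ j =
  cos (j%:R * (2 * pi / m%:R)) +i* sin (j%:R * (2 * pi / m%:R)).
Proof.
elim: j => [|j IH]; first by rewrite expr0 mul0r cos0 sin0.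
rewrite exprS IH /zeta mulC_rect.
have -> : j.+1%:R * (2 * pi / m%:R) = 2 * pi / m%:R + j%:R * (2 * pi / m%:R) :> R.
  by rewrite mulrSr mulrDl mul1r addrC.
by rewrite cosD sinD; congr (_ +i* _); rewrite addrC.
Qed.

Lemma conj_rect (a b : R) : (a +i* b)^* = a +i* (- b).
Proof. by []. Qed.


Lemma zeta_m m : (0 < m)%N -> zeta R m ^+ m = 1.
Proof.
move=> hm; rewrite zeta_expr mulrCA divff ?pnatr_eq0 -?lt0n // mulr1.
by rewrite -mulr_natr mulrC mul1r mulr_natr cos2pi sin2pi.
Qed.

Lemma zeta_neq1 m j : (0 < j)%N -> (j < m)%N -> zeta R m ^+ j != 1.
Proof.
move=> hj hjm; have hm : (0 < m)%N by apply: leq_ltn_trans hjm.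
rewrite zeta_expr; set x := _ * _.
have hx0 : 0 < x by rewrite /x mulr_gt0 ?ltr0n // divr_gt0 ?ltr0n // mulr_gt0 ?pi_gt0.
have hx2 : x < pi *+ 2.
  have -> : x = (2 * pi) * (j%:R / m%:R) by rewrite /x mulrCA mulrA.
  rewrite -[X in _ < X]mulr_natl gtr_pMr ?mulr_gt0 ?pi_gt0 // ltr_pdivrMr ?ltr0n // mul1r.
  by rewrite ltr_nat.
apply/eqP => -[hc hs].
case: (ltgtP x pi) => hxp.
- by have := @sin_gt0_pi R x; rewrite hx0 hxp hs ltxx => /(_ isT).
- have := @sin_gt0_pi R (x - pi).
  rewrite subr_gt0 hxp ltrBlDr -(mulr2n pi) hx2 => /(_ isT).
  by have := sinDpi (x - pi); rewrite subrK hs => /eqP; rewrite eq_sym oppr_eq0 => /eqP ->; rewrite ltxx.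
- by move: hc; rewrite hxp cospi; lra.
Qed.

Lemma zeta_neq0 m : (0 < m)%N -> zeta R m != 0.
Proof.
move=> hm; apply/negP => /eqP h; have := zeta_m _ hm; rewrite h expr0n.
by rewrite eqn0Ngt hm /= => /eqP; rewrite eq_sym oner_eq0.
Qed.

Lemma zeta_conj m j : (zeta R m ^+ j)^* = (zeta R m ^+ j)^-1.
Proof.
apply/esym/mulr1_eq; rewrite zeta_expr /= mulC_rect.
rewrite mulrN opprK -!expr2 cos2Dsin2 mulrN [sin _ * _]mulrC addNr.
by [].
Qed.

Lemma zeta_inj m b c : (b < m)%N -> (c < m)%N -> zeta R m ^+ b = zeta R m ^+ c -> b = c.
Proof.
move=> hb hc; have hm : (0 < m)%N by apply: leq_ltn_trans hb.
wlog hbc : b c hb hc / (b <= c)%N.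
  move=> W; case: (leqP b c) => h; first exact: W.
  by move=> /esym e; apply/esym; apply: W => //; apply: ltnW.
move=> e; apply/eqP; rewrite eqn_leq hbc /=; rewrite leqNgt; apply/negP => hlt.
have e2 : zeta R m ^+ b * zeta R m ^+ (c - b) = zeta R m ^+ b * 1.
  by rewrite mulr1 -exprD subnKC // e.
have e3 := mulfI (expf_neq0 b (zeta_neq0 _ hm)) e2.
have h1 : (0 < c - b)%N by rewrite subn_gt0.
have := zeta_neq1 _ _ h1 (leq_ltn_trans (leq_subr _ _) hc).
by rewrite e3 eqxx.
Qed.

Lemma zeta_sum m b c : (b < m)%N -> (c < m)%N ->
  \sum_(a < m) zeta R m ^+ (b * a) * (zeta R m ^+ (c * a))^-1 =
  if b == c then m%:R else 0.
Proof.
move=> hb hc; have hm : (0 < m)%N by apply: leq_ltn_trans hb.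
set w := zeta R m; set u := w ^+ b * (w ^+ c)^-1.
have hw : w ^+ c != 0 by rewrite expf_neq0 // zeta_neq0.
have -> : \sum_(a < m) w ^+ (b * a) * (w ^+ (c * a))^-1 = \sum_(a < m) u ^+ a.
  by apply: eq_bigr => a _; rewrite /u exprMn !exprM exprVn.
case: eqP => [e|hne].
  rewrite /u e divff //.
  under eq_bigr do rewrite expr1n.
  by rewrite sumr_const card_ord.
have hu1 : u != 1.
  apply/negP => /eqP h; apply: hne; apply: (zeta_inj _ _ _ hb hc).
  by move: h; rewrite /u => /eqP; rewrite (can2_eq (divrK _) (mulrK _)) ?unitfE // mul1r => /eqP.
have hum : u ^+ m = 1.
  by rewrite /u exprMn exprVn -!exprM mulnC exprM zeta_m // expr1n mulnC exprM zeta_m // expr1n invr1 mulr1.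
have := subrX1 u m; rewrite hum subrr => /esym /eqP; rewrite mulf_eq0 subr_eq0 (negbTE hu1) /=.
by move/eqP.
Qed.

Close Scope complex_scope.
End Z.

Section Main.
Variable R : realType.
Variable N : nat.
Variable n : nat -> nat.
Hypothesis hmono : forall k : nat, (k.+1 < N)%N -> (n k.+1 <= n k)%N.
Hypothesis hpos : forall k : nat, (k < N)%N -> (0 < n k)%N.

Local Notation H := (hvec R N n).
Local Notation I := (idx N n).
Local Notation C := (R[i]).
Local Notation hdot := (hdot R N n).
Local Notation ket := (ket R N n).
Local Notation phi := (phi R N n).
Local Notation Z := (transport R N n).
Local Notation Zs := (adj R N n (transport R N n)).

Definition valid k a := (k < N)%N && (a < n k)%N.

Lemma idx_eq (i j : I) :
  ((tag i == tag j :> nat) && (tagged i == tagged j :> nat)) = (i == j).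
Proof.
apply/idP/eqP => [|->]; last by rewrite !eqxx.
case: i j => [k a] [k' b] /= /andP[/eqP e1 /eqP e2].
have e : k = k' by apply: val_inj.
subst k'; have -> : a = b by apply: val_inj.
by [].
Qed.

Lemma sum_idx (f : nat -> nat -> C) :
  \sum_(i : I) f (tag i : nat) (tagged i : nat) = \sum_(k < N) \sum_(a < n k) f k a.
Proof.
by rewrite (sig_big_dep predT (fun _ _ => true) (fun (k : 'I_N) (a : 'I_(n k)) => f k a)).
Qed.

Lemma sum_delta (M c : nat) (F : nat -> C) :
  \sum_(i < M) (if c == i :> nat then F i else 0) = if (c < M)%N then F c else 0.
Proof.
case: ltnP => h.
  rewrite (bigD1 (Ordinal h)) //= eqxx big1 ?addr0 // => i hi.
  case: eqP => // e; case/negP: hi; apply/eqP/val_inj; by rewrite /= e.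
rewrite big1 // => i _; case: eqP => // e.
by have := ltn_ord i; rewrite -e ltnNge h.
Qed.

Lemma sum_idx_delta k a (f : nat -> nat -> C) :
  \sum_(i : I) (if (tag i == k :> nat) && (tagged i == a :> nat)
                then f (tag i : nat) (tagged i : nat) else 0) =
  if valid k a then f k a else 0.
Proof.
rewrite (sum_idx (fun k' a' => if (k' == k) && (a' == a) then f k' a' else 0)).
under eq_bigr => k' _.
  have -> : \sum_(a' < n k') (if (k' == k :> nat) && (a' == a :> nat) then f k' a' else 0) =
     (if k == k' :> nat then (if (a < n k')%N then f k' a else 0) else 0).
    rewrite eq_sym; case: eqP => _ /=; last by rewrite big1.
    rewrite -sum_delta; apply: eq_bigr => i _; rewrite eq_sym; case: eqP => // ->.
  over.
by rewrite (sum_delta N k (fun k' => if (a < n k')%N then f k' a else 0)) /valid; case: ltnP.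
Qed.

Definition co (u : H) (k a : nat) : C :=
  \sum_(i : I) (if (tag i == k :> nat) && (tagged i == a :> nat) then u i else 0).

Lemma co_ffun u (i : I) : co u (tag i) (tagged i) = u i.
Proof.
rewrite /co (bigD1 i) ?eqxx //= big1 ?addr0 // => j.
by rewrite idx_eq => /negbTE ->.
Qed.

Lemma co_ffunE (f : nat -> nat -> C) k a :
  co [ffun i : I => f (tag i : nat) (tagged i : nat)] k a = if valid k a then f k a else 0.
Proof.
rewrite /co -sum_idx_delta; apply: eq_bigr => i _; rewrite ffunE.
by case: andP => // -[/eqP -> /eqP ->].
Qed.

Lemma co_ket j b k a :
  co (ket j b) k a = if valid k a then (if (k == j) && (a == b) then 1 else 0) else 0.
Proof. exact: (co_ffunE (fun k' a' => if (k' == j) && (a' == b) then 1 else 0)). Qed.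

Lemma co_inj u v : (forall k a, valid k a -> co u k a = co v k a) -> u = v.
Proof.
move=> h; apply/ffunP => i; rewrite -!co_ffun; apply: h.
by rewrite /valid ltn_ord /=; exact: ltn_ord.
Qed.

Lemma co_add u v k a : co (u + v) k a = co u k a + co v k a.
Proof.
rewrite /co -big_split; apply: eq_bigr => i _; rewrite ffunE.
by case: ifP => _; rewrite /= ?addr0.
Qed.

Lemma co_scale c u k a : co (c *: u) k a = c * co u k a.
Proof.
rewrite /co mulr_sumr; apply: eq_bigr => i _; rewrite ffunE.
by case: ifP; rewrite ?mulr0.
Qed.

Lemma co0 k a : co 0 k a = 0.
Proof. by rewrite /co big1 // => i _; rewrite ffunE; case: ifP. Qed.

Lemma co_sum (J : Type) (r : seq J) (P : pred J) (F : J -> H) k a :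
  co (\sum_(x <- r | P x) F x) k a = \sum_(x <- r | P x) co (F x) k a.
Proof.
exact: (big_morph (fun u => co u k a) (fun u v => co_add u v k a) (co0 k a)).
Qed.

Lemma hdot_co u v : hdot u v = \sum_(k < N) \sum_(a < n k) (co u k a)^* * co v k a.
Proof.
rewrite /hdot -(sum_idx (fun k a => (co u k a)^* * co v k a)).
by apply: eq_bigr => i _; rewrite !co_ffun.
Qed.

Lemma hdot_ket j b v : hdot (ket j b) v = co v j b.
Proof.
rewrite /hdot /co; apply: eq_bigr => i _; rewrite ffunE.
by case: ifP; rewrite ?rmorph1 ?rmorph0 ?mul1r ?mul0r.
Qed.

Lemma hdotDr u v w : hdot u (v + w) = hdot u v + hdot u w.
Proof. by rewrite /hdot -big_split; apply: eq_bigr => i _; rewrite ffunE mulrDr. Qed.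

Lemma hdotZr c u v : hdot u (c *: v) = c * hdot u v.
Proof. by rewrite /hdot mulr_sumr; apply: eq_bigr => i _; rewrite ffunE mulrCA. Qed.

Lemma hdot0r u : hdot u 0 = 0.
Proof. by rewrite /hdot big1 // => i _; rewrite ffunE mulr0. Qed.

Lemma hdot_conj u v : hdot v u = (hdot u v)^*.
Proof.
rewrite /hdot rmorph_sum; apply: eq_bigr => i _.
by rewrite rmorphM /= conjCK mulrC.
Qed.

Lemma hdotDl u v w : hdot (v + w) u = hdot v u + hdot w u.
Proof. by rewrite hdot_conj hdotDr rmorphD /= -!hdot_conj. Qed.

Lemma hdotZl c u v : hdot (c *: v) u = c^* * hdot v u.
Proof. by rewrite hdot_conj hdotZr rmorphM /= -!hdot_conj. Qed.

Lemma hdot0l u : hdot 0 u = 0.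
Proof. by rewrite hdot_conj hdot0r rmorph0. Qed.

Lemma hdot_sumr (J : Type) (r : seq J) (P : pred J) (F : J -> H) u :
  hdot u (\sum_(x <- r | P x) F x) = \sum_(x <- r | P x) hdot u (F x).
Proof. exact: (big_morph (fun v => hdot u v) (fun v w => hdotDr u v w) (hdot0r u)). Qed.

Lemma hdot_suml (J : Type) (r : seq J) (P : pred J) (F : J -> H) u :
  hdot (\sum_(x <- r | P x) F x) u = \sum_(x <- r | P x) hdot (F x) u.
Proof. exact: (big_morph (fun v => hdot v u) (fun v w => hdotDl u v w) (hdot0l u)). Qed.

Lemma Zmat u : Z u = \sum_(k < N.-1) \sum_(b < n k.+1) \sum_(a < n k)
   (isqrt R (n k) * zeta R (n k) ^+ (b * a) * co u k a) *: ket k.+1 b.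
Proof.
rewrite /transport; apply: eq_bigr => k _; rewrite /Zk scaler_sumr.
apply: eq_bigr => b _; rewrite scaler_sumr; apply: eq_bigr => a _.
by rewrite /ketbra hdot_ket !scalerA.
Qed.

Lemma ZD u v : Z (u + v) = Z u + Z v.
Proof.
rewrite !Zmat -big_split; apply: eq_bigr => k _; rewrite -big_split.
apply: eq_bigr => b _; rewrite -big_split; apply: eq_bigr => a _.
by rewrite co_add mulrDr scalerDl.
Qed.

Lemma ZZ c u : Z (c *: u) = c *: Z u.
Proof.
rewrite !Zmat scaler_sumr; apply: eq_bigr => k _; rewrite scaler_sumr.
apply: eq_bigr => b _; rewrite scaler_sumr; apply: eq_bigr => a _.
by rewrite co_scale scalerA mulrCA.
Qed.

Lemma Z0 : Z 0 = 0.
Proof. by have := ZZ 0 0; rewrite !scale0r. Qed.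

Lemma Z_sum (J : Type) (r : seq J) (P : pred J) (F : J -> H) :
  Z (\sum_(x <- r | P x) F x) = \sum_(x <- r | P x) Z (F x).
Proof. exact: (big_morph Z ZD Z0). Qed.

Lemma ZE u j b : co (Z u) j b =
  if valid j b && (0 < j)%N then
    isqrt R (n j.-1) * \sum_(a < n j.-1) zeta R (n j.-1) ^+ (b * a) * co u j.-1 a
  else 0.
Proof.
rewrite Zmat co_sum.
have E : forall k : 'I_N.-1,
  co (\sum_(b' < n k.+1) \sum_(a < n k)
      (isqrt R (n k) * zeta R (n k) ^+ (b' * a) * co u k a) *: ket k.+1 b') j b
   = if j == k.+1 then (if valid j b then isqrt R (n k) *
        \sum_(a < n k) zeta R (n k) ^+ (b * a) * co u k a else 0) else 0.
  move=> k; rewrite co_sum.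
  case: eqP => [->|ne]; last first.
    rewrite big1 // => b' _; rewrite co_sum big1 // => a _; rewrite co_scale co_ket.
    by case: (valid j b); rewrite ?(introF eqP ne) /= ?mulr0.
  case hv: (valid k.+1 b); last first.
    rewrite big1 // => b' _; rewrite co_sum big1 // => a _.
    by rewrite co_scale co_ket hv mulr0.
  have hb : (b < n k.+1)%N by case/andP: hv.
  rewrite (bigD1 (Ordinal hb)) //= [X in _ + X]big1 ?addr0.
    rewrite co_sum mulr_sumr; apply: eq_bigr => a _.
    by rewrite co_scale co_ket hv !eqxx /= mulr1 mulrA.
  move=> b' hb'; rewrite co_sum big1 // => a _.
  rewrite co_scale co_ket hv eqxx /=.
  have -> : (b == b') = false.
    apply/negbTE; apply: contra hb' => /eqP e; apply/eqP/val_inj; by rewrite /= e.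
  by rewrite mulr0.
under eq_bigr => k _ do rewrite E.
clear E; case: j => [|j'].
  by rewrite big1 // andbF.
rewrite (sum_delta N.-1 j' (fun k => if valid j'.+1 b then isqrt R (n k) *
        \sum_(a < n k) zeta R (n k) ^+ (b * a) * co u k a else 0)) andbT /=.
case hv: (valid j'.+1 b); last by case: ifP.
have -> // : (j' < N.-1)%N.
by case/andP: hv => h _; lia.
Qed.

Lemma conj_isqrt m : (isqrt R m)^* = isqrt R m.
Proof. exact: conjc_real. Qed.

Lemma conj_zetaX m j : (zeta R m ^+ j)^* = (zeta R m ^+ j)^-1.
Proof. exact: zeta_conj. Qed.

Lemma isqrt2 m : (0 < m)%N -> isqrt R m * isqrt R m * m%:R = 1.
Proof.
move=> hm.
have h : (Num.sqrt (m%:R : R))^-1 * (Num.sqrt (m%:R : R))^-1 * m%:R = 1.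
  by rewrite -invfM -expr2 sqr_sqrtr ?ler0n // mulVf // pnatr_eq0 -lt0n.
by rewrite /isqrt -(rmorph_nat (real_complex R)) -!rmorphM h.
Qed.

Lemma evec_ket (i : I) : evec R N n i = ket (tag i) (tagged i).
Proof. by apply/ffunP => j; rewrite !ffunE idx_eq. Qed.

Lemma adjP (T : H -> H) (TD : forall u v, T (u + v) = T u + T v)
  (TZ : forall c u, T (c *: u) = c *: T u) x y :
  hdot (T x) y = hdot x (adj R N n T y).
Proof.
have T0 : T 0 = 0 by have := TZ 0 0; rewrite !scale0r.
have Ts : forall (r : seq I) (F : I -> H), T (\sum_(i <- r) F i) = \sum_(i <- r) T (F i).
  by move=> r F; apply: (big_morph T TD T0).
have ex : x = \sum_(i : I) x i *: evec R N n i.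
  apply/ffunP => j; rewrite sum_ffunE (bigD1 j) //= big1 ?addr0.
    rewrite !ffunE eqxx; first by rewrite /GRing.scale /= mulr1.
  by move=> i hi; rewrite !ffunE eq_sym (negbTE hi) scaler0.
rewrite {1}ex Ts hdot_suml {2}/hdot; apply: eq_bigr => i _.
rewrite TZ hdotZl /adj sum_ffunE (bigD1 i) //= [X in _ + X]big1 ?addr0.
  by rewrite !ffunE eqxx /GRing.scale /= mulr1.
by move=> j hj; rewrite !ffunE eq_sym (negbTE hj) scaler0.
Qed.

Lemma Zadj x y : hdot (Z x) y = hdot x (Zs y).
Proof. exact: adjP ZD ZZ x y. Qed.

Lemma adjD (T : H -> H) u v : adj R N n T (u + v) = adj R N n T u + adj R N n T v.
Proof. by rewrite /adj -big_split; apply: eq_bigr => i _; rewrite hdotDr scalerDl. Qed.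

Lemma adjZ (T : H -> H) c u : adj R N n T (c *: u) = c *: adj R N n T u.
Proof. by rewrite /adj scaler_sumr; apply: eq_bigr => i _; rewrite hdotZr scalerA. Qed.

Lemma sum_mul_if (M : nat) (P : bool) (X G : 'I_M -> C) :
  \sum_(a < M) X a * (if P then G a else 0) = if P then \sum_(a < M) X a * G a else 0.
Proof. by case: P => //; rewrite big1 // => a _; rewrite mulr0. Qed.

Lemma co_phi k a j b : co (phi k a) j b =
  if valid j b && (j == k) then isqrt R (n k) * (zeta R (n k) ^+ (b * a))^-1 else 0.
Proof.
rewrite /phi co_sum.
case hv: (valid j b); last by rewrite big1 // => b' _; rewrite co_scale co_ket hv mulr0.
case: eqP => [e|ne] /=; last first.
  by rewrite big1 // => b' _; rewrite co_scale co_ket hv (introF eqP ne) mulr0.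
subst j; have hb : (b < n k)%N by case/andP: hv.
transitivity (\sum_(b' < n k) (if b == b' :> nat then
   isqrt R (n k) * (zeta R (n k) ^+ (b' * a))^-1 else 0)).
  apply: eq_bigr => b' _; rewrite co_scale co_ket hv eqxx /=.
  by case: eqP => _; rewrite ?mulr1 ?mulr0.
by rewrite (sum_delta (n k) b (fun b' => isqrt R (n k) * (zeta R (n k) ^+ (b' * a))^-1)) hb.
Qed.

Lemma co_adj y k a : co (Zs y) k a = if valid k a then hdot (Z (ket k a)) y else 0.
Proof.
rewrite /adj co_sum.
case hv: (valid k a); last first.
  by rewrite big1 // => i _; rewrite co_scale evec_ket co_ket hv mulr0.
transitivity (if valid k a then hdot (Z (ket k a)) y else 0); last by rewrite hv.
rewrite -(sum_idx_delta k a (fun k' a' => hdot (Z (ket k' a')) y)).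
apply: eq_bigr => i _; rewrite co_scale evec_ket co_ket hv.
rewrite [k == _]eq_sym [a == _]eq_sym.
by case: ifP; rewrite ?mulr1 ?mulr0.
Qed.

Lemma co_Zket k a j b : co (Z (ket k a)) j b =
  if valid j b && (j == k.+1) && (a < n k)%N then isqrt R (n k) * zeta R (n k) ^+ (b * a) else 0.
Proof.
rewrite ZE.
case hv: (valid j b) => //=.
case: j hv => [|j] hv //=.
rewrite eqSS.
case: (j =P k) => [e|ne] /=; last first.
  rewrite big1 ?mulr0 // => a' _; rewrite co_ket (introF eqP ne) /=.
  by case: (valid _ _); rewrite mulr0.
subst j.
have hk : (k < N)%N by case/andP: hv => h _; apply: ltnW.
transitivity (isqrt R (n k) * \sum_(a' < n k) (if a == a' :> nat then zeta R (n k) ^+ (b * a') else 0)).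
  congr (_ * _); apply: eq_bigr => a' _.
  rewrite co_ket /valid hk ltn_ord eqxx /= (eq_sym (a' : nat)).
  by case: eqP => _; rewrite ?mulr1 ?mulr0.
by rewrite (sum_delta (n k) a (fun a' => zeta R (n k) ^+ (b * a'))); case: ifP; rewrite ?mulr0.
Qed.

Lemma ZsE y k a : co (Zs y) k a =
  if valid k a && (k < N.-1)%N then
    isqrt R (n k) * \sum_(b < n k.+1) (zeta R (n k) ^+ (b * a))^-1 * co y k.+1 b
  else 0.
Proof.
rewrite co_adj.
case hv: (valid k a) => //=.
have ha : (a < n k)%N by case/andP: hv.
rewrite hdot_co.
transitivity (\sum_(j < N) (if k.+1 == j :> nat then \sum_(b < n j)
   (isqrt R (n k) * zeta R (n k) ^+ (b * a))^* * co y j b else 0)).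
  apply: eq_bigr => j _; case: eqP => [e|ne].
    apply: eq_bigr => b _; rewrite co_Zket /valid !ltn_ord ha /=.
    by have -> : (j == k.+1 :> nat) by apply/eqP.
  rewrite big1 // => b _; rewrite co_Zket.
  have -> : (j == k.+1 :> nat) = false by apply/eqP => e; apply: ne; rewrite e.
  by rewrite andbF /= rmorph0 mul0r.
rewrite (sum_delta N k.+1 (fun j => \sum_(b < n j)
   (isqrt R (n k) * zeta R (n k) ^+ (b * a))^* * co y j b)).
have -> : (k.+1 < N)%N = (k < N.-1)%N by lia.
case: ifP => // _.
rewrite mulr_sumr; apply: eq_bigr => b _.
by rewrite rmorphM /= conj_isqrt conj_zetaX mulrA.
Qed.

Lemma ring_test (s z w c : C) : z * (s * (w^-1 * c)) = s * (c * (z * w^-1)).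
Proof. ring. Qed.

Lemma Zphi k a : (k < N.-1)%N -> (a < n k)%N -> Z (phi k a) = ket k.+1 a.
Proof.
move=> hk ha; apply: co_inj => j b hv.
rewrite ZE co_ket hv /=.
case: j hv => [|j] hv //=.
rewrite eqSS.
case: (j =P k) => [e|ne] /=; last first.
  by rewrite big1 ?mulr0 // => a' _; rewrite co_phi (introF eqP ne) andbF mulr0.
subst j.
have hkN : (k < N)%N by lia.
have hb : (b < n k)%N.
  by case/andP: hv => h1 h; apply: leq_trans h (hmono _ _).
transitivity (isqrt R (n k) * (isqrt R (n k) * \sum_(a' < n k)
   zeta R (n k) ^+ (b * a') * (zeta R (n k) ^+ (a * a'))^-1)).
  congr (_ * _); rewrite mulr_sumr; apply: eq_bigr => a' _.
  by rewrite co_phi /valid hkN ltn_ord eqxx /= (mulnC a' a) mulrCA.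
rewrite zeta_sum //; case: eqP => _; last by rewrite !mulr0.
by rewrite mulrA isqrt2 // hpos.
Qed.

Lemma Zsket k a : (k < N.-1)%N -> (a < n k.+1)%N -> Zs (ket k.+1 a) = phi k a.
Proof.
move=> hk ha; apply: co_inj => j b hv.
rewrite ZsE co_phi hv /=.
case: (j =P k) => [e|ne] /=; last first.
  case: ifP => // _; rewrite big1 ?mulr0 // => b' _.
  by rewrite co_ket eqSS (introF eqP ne) /=; case: (valid _ _); rewrite mulr0.
subst j; rewrite hk.
have hkN : (k.+1 < N)%N by lia.
congr (_ * _).
transitivity (\sum_(b' < n k.+1) (if a == b' :> nat then (zeta R (n k) ^+ (b' * b))^-1 else 0)).
  apply: eq_bigr => b' _; rewrite co_ket /valid hkN ltn_ord eqxx /= (eq_sym (b' : nat)).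
  by case: eqP => _; rewrite ?mulr1 ?mulr0.
by rewrite (sum_delta (n k.+1) a (fun b' => (zeta R (n k) ^+ (b' * b))^-1)) ha mulnC.
Qed.

Lemma domZs_co (y : H) : (forall i : I, tag i = 0 :> nat -> y i = 0) -> forall b, co y 0 b = 0.
Proof.
move=> hy b; rewrite /co big1 // => i _; case: ifP => // /andP[/eqP h _]; exact: hy.
Qed.

Lemma ZZs (y : H) : (forall i : I, tag i = 0 :> nat -> y i = 0) -> Z (Zs y) = y.
Proof.
move=> hy; apply: co_inj => j b hv.
rewrite ZE hv /=.
case: j hv => [|j] hv /=; first by rewrite domZs_co.
have hjN : (j < N.-1)%N by case/andP: hv => h _; lia.
have hj : (j < N)%N by lia.
have hb : (b < n j.+1)%N by case/andP: hv.
have hmj : (n j.+1 <= n j)%N by apply: hmono; case/andP: hv.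
transitivity (isqrt R (n j) * \sum_(a < n j) zeta R (n j) ^+ (b * a) *
   (isqrt R (n j) * \sum_(b' < n j.+1) (zeta R (n j) ^+ (b' * a))^-1 * co y j.+1 b')).
  by congr (_ * _); apply: eq_bigr => a _; rewrite ZsE /valid hj ltn_ord hjN.
transitivity (isqrt R (n j) * isqrt R (n j) * \sum_(b' < n j.+1) co y j.+1 b' *
   \sum_(a < n j) zeta R (n j) ^+ (b * a) * (zeta R (n j) ^+ (b' * a))^-1).
  rewrite -mulrA; congr (_ * _).
  under eq_bigr => a _ do rewrite mulr_sumr mulr_sumr.
  rewrite exchange_big mulr_sumr; apply: eq_bigr => b' _.
  rewrite mulr_sumr mulr_sumr; apply: eq_bigr => a _.
  by ring.
transitivity (isqrt R (n j) * isqrt R (n j) * \sum_(b' < n j.+1)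
   (if b == b' :> nat then co y j.+1 b' * (n j)%:R else 0)).
  congr (_ * _); apply: eq_bigr => b' _.
  rewrite zeta_sum ?(leq_trans _ hmj) //.
  by case: eqP => _; rewrite ?mulr0.
rewrite (sum_delta (n j.+1) b (fun b' => co y j.+1 b' * (n j)%:R)) hb.
by rewrite mulrCA isqrt2 ?mulr1 // hpos.
Qed.

Lemma hdot_phi k a x : hdot (phi k a) x =
  isqrt R (n k) * \sum_(c < n k) zeta R (n k) ^+ (c * a) * co x k c.
Proof.
rewrite /phi hdot_suml mulr_sumr; apply: eq_bigr => c _.
by rewrite hdotZl hdot_ket rmorphM /= conj_isqrt -conj_zetaX conjCK mulrA.
Qed.

Lemma hdot_phi_Z k a x : (k < N.-1)%N -> (a < n k.+1)%N ->
  hdot (phi k a) x = co (Z x) k.+1 a.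
Proof.
move=> hk ha; rewrite hdot_phi ZE /valid ha /=.
have -> : (k.+1 < N)%N by lia.
by congr (_ * _); apply: eq_bigr => c _; rewrite mulnC.
Qed.

Lemma Z_domZs x : forall i : I, tag i = 0 :> nat -> (Z x) i = 0.
Proof.
move=> i h; rewrite -co_ffun ZE.
by rewrite (_ : (0 < tag i)%N = false) ?andbF // h.
Qed.

Lemma Zs_domZ y : forall i : I, (N.-1 <= tag i)%N -> (Zs y) i = 0.
Proof. by move=> i h; rewrite -co_ffun ZsE ltnNge h andbF. Qed.

Lemma ket_out j a : (n j <= a)%N -> ket j a = 0.
Proof.
move=> h; apply/ffunP => i; rewrite !ffunE.
case: andP => // -[/eqP e /eqP e2].
have := ltn_ord (tagged i); rewrite e2.
by move: (tagged i) => /=; rewrite e => _; rewrite ltnNge h.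
Qed.

Lemma complete (x : H) : (forall i : I, (N.-1 <= tag i)%N -> x i = 0) ->
  x = \sum_(k < N.-1) \sum_(a < n k) hdot (phi k a) x *: phi k a.
Proof.
move=> hx; apply: co_inj => j b hv.
rewrite co_sum.
case: (ltnP j N.-1) => hj; last first.
  rewrite big1.
    by rewrite /co big1 // => i _; case: ifP => // /andP[/eqP h _]; apply: hx; rewrite h.
  move=> k _; rewrite co_sum big1 // => a _; rewrite co_scale co_phi.
  have -> : (j == k) = false.
    by apply/negbTE; rewrite neq_ltn (leq_trans (ltn_ord k) hj) orbT.
  by rewrite andbF mulr0.
symmetry; transitivity (\sum_(k < N.-1) (if j == k :> nat then \sum_(a < n k)
   hdot (phi k a) x * (isqrt R (n k) * (zeta R (n k) ^+ (b * a))^-1) else 0)).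
  apply: eq_bigr => k _; rewrite co_sum.
  case: eqP => [e|ne].
    by apply: eq_bigr => a _; rewrite co_scale co_phi hv /= e eqxx.
  by rewrite big1 // => a _; rewrite co_scale co_phi (introF eqP ne) andbF mulr0.
rewrite (sum_delta N.-1 j (fun k => \sum_(a < n k)
   hdot (phi k a) x * (isqrt R (n k) * (zeta R (n k) ^+ (b * a))^-1))) hj.
have hjN : (j < N)%N by lia.
have hb : (b < n j)%N by case/andP: hv.
transitivity (isqrt R (n j) * isqrt R (n j) * \sum_(c < n j) co x j c *
   \sum_(a < n j) zeta R (n j) ^+ (c * a) * (zeta R (n j) ^+ (b * a))^-1).
  under eq_bigr => a _ do rewrite hdot_phi mulr_sumr mulr_suml.
  rewrite exchange_big mulr_sumr; apply: eq_bigr => c _.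
  rewrite mulr_sumr mulr_sumr; apply: eq_bigr => a _.
  by ring.
transitivity (isqrt R (n j) * isqrt R (n j) * \sum_(c < n j)
   (if b == c :> nat then co x j c * (n j)%:R else 0)).
  congr (_ * _); apply: eq_bigr => c _.
  rewrite zeta_sum // eq_sym.
  by case: eqP => _; rewrite ?mulr0.
rewrite (sum_delta (n j) b (fun c => co x j c * (n j)%:R)) hb.
by rewrite mulrCA isqrt2 ?mulr1 // hpos.
Qed.

End Main.
Theorem proposition2p9 (R : realType) (N : nat) (n : nat -> nat)
  (hN : (2 <= N)%N)
  (hmono : forall k : nat, (k.+1 < N)%N -> (n k.+1 <= n k)%N)
  (hpos : forall k : nat, (k < N)%N -> (0 < n k)%N) :
  let Z := transport R N n in
  let Zs := adj R N n (transport R N n) in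
  let absZ := fun x => Zs (Z x) in
  (* domain of Z : (+)_{k=1}^{N-1} E_k (0-based blocks 0 .. N-2) *)
  let domZ := fun x : hvec R N n => forall i : idx N n, (N.-1 <= tag i)%N -> x i = 0 in
  (* domain of Z^* : (+)_{k=2}^{N} E_k (0-based blocks 1 .. N-1) *)
  let domZs := fun x : hvec R N n => forall i : idx N n, tag i = 0 :> nat -> x i = 0 in
  (* (+)_{k=1}^{N-1} span{ phi_{a_k} : a = n_{k+1}, ..., n_k - 1 } *)
  let K := fun x : hvec R N n => exists c : nat -> nat -> R[i],
        x = \sum_(k < N.-1) \sum_(n k.+1 <= a < n k) c k a *: phi R N n k a in
  let ranAbsZ := fun y => exists2 x, domZ x & y = absZ x in
  let ranZZs := fun y => exists2 x, domZs x & y = Z (Zs x) in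
  [/\ (forall x, (domZ x /\ Z x = 0) <-> K x),
      (forall x, (domZ x /\ absZ x = 0) <-> K x),
      isometric_iso R N n ranAbsZ ranZZs Z,
      isometric_iso R N n ranZZs ranAbsZ Zs
    & forall k a : nat, (k < N.-1)%N -> (a < n k.+1)%N ->
        Z (phi R N n k a) = ket R N n k.+1 a /\ Zs (ket R N n k.+1 a) = phi R N n k a].
Proof.
have ZZs' := @ZZs R N n hmono hpos.
have Zphi' := @Zphi R N n hmono hpos.
have complete' := @complete R N n hpos.
have ZZsZ : forall x, transport R N n (adj R N n (transport R N n) (transport R N n x)) = transport R N n x.
  by move=> x; apply: ZZs'; apply: Z_domZs.
have Zs0 : adj R N n (transport R N n) 0 = 0.
  by have := @adjZ R N n (transport R N n) 0 0; rewrite !scale0r.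
cbv beta zeta.
have P1 : forall x : hvec R N n,
  (forall i : idx N n, (N.-1 <= tag i)%N -> x i = 0) /\ transport R N n x = 0 <->
  (exists c : nat -> nat -> R[i],
        x = \sum_(k < N.-1) \sum_(n k.+1 <= a < n k) c k a *: phi R N n k a).
  move=> x; split.
    case=> hx hZ; exists (fun k a => hdot R N n (phi R N n k a) x).
    rewrite {1}(complete' x hx); apply: eq_bigr => k _.
    have hk : (k.+1 < N)%N by have := ltn_ord k; lia.
    rewrite -(big_mkord xpredT (fun a => hdot R N n (phi R N n k a) x *: phi R N n k a)).
    rewrite (big_cat_nat (leq0n (n k.+1)) (hmono _ hk)) /=.
    rewrite big_nat_cond big1 ?add0r // => a /andP[/andP[_ ha] _].
    by rewrite hdot_phi_Z // hZ co0 scale0r.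
  case=> c ->; split.
    move=> i hi; rewrite -co_ffun co_sum big1 // => k _.
    rewrite co_sum big1 // => a _; rewrite co_scale co_phi.
    rewrite (_ : (tag i == k :> nat) = false) ?andbF ?mulr0 //.
    by apply/negbTE; rewrite neq_ltn (leq_trans (ltn_ord k) hi) orbT.
  rewrite Z_sum big1 // => k _; rewrite Z_sum big_nat_cond big1 // => a /andP[/andP[ha1 ha2] _].
  by rewrite ZZ Zphi' // ket_out // scaler0.
split.
- exact: P1.
- move=> x; rewrite -P1; split; case=> hx h; split => //.
    by have := congr1 (transport R N n) h; rewrite ZZsZ Z0.
  by rewrite h Zs0.
- split.
  + by move=> c x y _ _; rewrite ZD ZZ.
  + move=> _ [x hx ->]; exists (transport R N n x); first exact: Z_domZs.
    by [].
  + move=> _ _ [u1 hu1 ->] [u2 hu2 ->] e.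
    have e' : transport R N n u1 = transport R N n u2 :=
      etrans (esym (ZZsZ u1)) (etrans e (ZZsZ u2)).
    exact: (congr1 (adj R N n (transport R N n)) e').
  + move=> _ [x hx ->]; exists (adj R N n (transport R N n) x); last by [].
    exists (adj R N n (transport R N n) x); first exact: Zs_domZ.
    exact: (esym (congr1 (adj R N n (transport R N n)) (ZZs' x hx))).
  + move=> _ [x hx ->]; rewrite /hnorm; apply: (congr1 (fun z => sqrtC z)).
    exact: (etrans (@Zadj R N n _ _) (congr1 (hdot R N n _)
       (congr1 (adj R N n (transport R N n)) (ZZsZ x)))).
- split.
  + by move=> c x y _ _; rewrite adjD adjZ.
  + move=> _ [x hx ->]; exists (adj R N n (transport R N n) x); first exact: Zs_domZ.
    by [].
  + move=> _ _ [x1 h1 ->] [x2 h2 ->] e.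
    have e1 : adj R N n (transport R N n) x1 = adj R N n (transport R N n) x2 :=
      etrans (esym (congr1 (adj R N n (transport R N n)) (ZZs' x1 h1)))
        (etrans e (congr1 (adj R N n (transport R N n)) (ZZs' x2 h2))).
    exact: (congr1 (transport R N n) e1).
  + move=> _ [x hx ->]; exists (transport R N n x); last by [].
    exists (transport R N n x); first exact: Z_domZs.
    exact: (esym (ZZsZ x)).
  + move=> _ [x hx ->]; rewrite /hnorm; apply: (congr1 (fun z => sqrtC z)).
    set y := transport R N n (adj R N n (transport R N n) x).
    exact: (etrans (esym (@Zadj R N n (adj R N n (transport R N n) y) y))
       (congr1 (fun v => hdot R N n v y) (ZZs' y (@Z_domZs R N n _)))).
- move=> k a hk ha; split.
    have hk1 : (k.+1 < N)%N by lia.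
    by apply: Zphi' => //; exact: leq_trans ha (hmono _ hk1).
  exact: Zsket.
Qed.
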